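(* Let $R\ge1$, let $G$ be an observable of $R$ replicas, and let $0<\beta_1<\beta_2$. Then, in the thermodynamic limit $|\Lambda|\to\infty$, $\int_{\beta_1}^{\beta_2}\Delta_1 G\, d\beta \to 0$, where $$\Delta_1 G=\sum_{l=1}^{R}\mathrm{Av}\Big(\Omega_R[h(\sigma^{(l)})\,G]-\Omega_R[h(\sigma^{(l)})]\,\Omega_R[G]\Big),\qquad h(\sigma)=H_\Lambda(\sigma)/|\Lambda|.$$
   Context: For each finite $d$-dimensional parallelepiped $\Lambda\subset\mathbb{Z}^d$ let $\Sigma_\Lambda=\{-1,1\}^\Lambda$, and for $X\subset\Lambda$ let $\sigma_X=\prod_{i\in X}\sigma_i$ (with $\sigma_\emptyset=0$). Let $\{J_X\}$ be independent centered Gaussian random variables with variances $\mathrm{Av}(J_X^2)=\Delta_X^2$, translation invariant, where $\mathrm{Av}$ denotes expectation over the $J$'s. The Hamiltonian is $H_\Lambda(\sigma)=-\sum_{X\subset\Lambda}J_X\sigma_X$, with normalized covariance $c_\Lambda(\sigma,\tau)=\frac{1}{|\Lambda|}\sum_{X\subset\Lambda}\Delta_X^2\sigma_X\tau_X$. Let $\mathcal{Z}(\beta)=\sum_{\sigma\in\Sigma_\Lambda}e^{-\beta H_\Lambda(\sigma)}$ and the $R$-replica random Gibbs state $\Omega_R(f)=\sum_{\sigma^{(1)},\dots,\sigma^{(R)}}f\,e^{-\beta\sum_{i=1}^R H_\Lambda(\sigma^{(i)})}/\mathcal{Z}(\beta)^R$. An observable of $R$ replicas is a smooth function $G$ of an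 $R\times R$ real matrix with $|G|\le 1$, evaluated at $(c_\Lambda(\sigma^{(k)},\sigma^{(l)}))_{k,l\le R}$. The thermodynamic limit is the limit along boxes $\Lambda$ with $|\Lambda|\to\infty$. *)

(* Defs.v *)
From HB Require Import structures.
From mathcomp Require Import all_boot all_order all_algebra finmap.
From mathcomp Require Import all_classical all_reals all_analysis.
Set Implicit Arguments. Unset Strict Implicit. Unset Printing Implicit Defensive.
Import Order.TTheory GRing.Theory Num.Theory.
Import numFieldNormedType.Exports.
Local Open Scope classical_set_scope.
Local Open Scope ring_scope.

Definition site (d : nat) := 'rV[int]_d.

Definition translate d (v : site d) (X : {fset site d}) : {fset site d} :=
  [fset (x + v)%R | x in X]%fset.

(* A d-dimensional parallelepiped Lambda = prod_i [a_i, a_i + L_i) of Z^d is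
   given by a corner a and side lengths L; [box L] is its finite type of
   points, written relative to the corner. *)
Definition box d (L : 'I_d -> nat) := {dffun forall i : 'I_d, 'I_(L i)}.

Definition pos d (a : 'I_d -> int) (L : 'I_d -> nat) (x : box L) : site d :=
  \row_i (a i + (x i : nat)%:Z).

Definition sites d (a : 'I_d -> int) (L : 'I_d -> nat) (X : {set box L})
  : {fset site d} := [fset pos a x | x in enum X]%fset.

(* Sigma_Lambda = {-1,1}^Lambda, a spin being encoded by a boolean *)
Definition config d (L : 'I_d -> nat) := {ffun box L -> bool}.

Definition spin {R : realType} d (L : 'I_d -> nat) (s : config L) (i : box L)
  : R := if s i then 1 else -1.

(* sigma_X = prod_{i in X} sigma_i, with the convention sigma_emptyset = 0 *)
Definition sigmaX {R : realType} d (L : 'I_d -> nat) (X : {set box L})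
  (s : config L) : R :=
  if X == finset.set0 then 0 else \prod_(i in X) spin s i.

(* normalized covariance c_Lambda(sigma, tau), Delta X ^+ 2 = Av(J_X^2) *)
Definition cov {R : realType} d (a : 'I_d -> int) (L : 'I_d -> nat)
  (Delta : {fset site d} -> R) (s t : config L) : R :=
  (#|box L|%:R)^-1 *
    \sum_(X : {set box L}) Delta (sites a X) ^+ 2 * sigmaX X s * sigmaX X t.

Definition Ham {R : realType} {T : Type} d (a : 'I_d -> int) (L : 'I_d -> nat)
  (J : {fset site d} -> T -> R) (w : T) (s : config L) : R :=
  - \sum_(X : {set box L}) J (sites a X) w * sigmaX X s.

Definition hdens {R : realType} {T : Type} d (a : 'I_d -> int)
  (L : 'I_d -> nat) (J : {fset site d} -> T -> R) (w : T) (s : config L) : R :=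
  Ham a J w s / (#|box L|%:R).

Definition Zpart {R : realType} {T : Type} d (a : 'I_d -> int)
  (L : 'I_d -> nat) (J : {fset site d} -> T -> R) (w : T) (beta : R) : R :=
  \sum_(s : config L) expR (- beta * Ham a J w s).

Definition replicas (n : nat) d (L : 'I_d -> nat) := {ffun 'I_n -> config L}.

Definition Omega {R : realType} {T : Type} (n : nat) d (a : 'I_d -> int)
  (L : 'I_d -> nat) (J : {fset site d} -> T -> R) (w : T) (beta : R)
  (f : replicas n L -> R) : R :=
  (\sum_(S : replicas n L)
      f S * expR (- beta * \sum_(k < n) Ham a J w (S k)))
  / (Zpart a L J w beta) ^+ n.

Definition covmx {R : realType} (n : nat) d (a : 'I_d -> int)
  (L : 'I_d -> nat) (Delta : {fset site d} -> R) (S : replicas n L)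
  : 'M[R]_n := \matrix_(k, l) cov a Delta (S k) (S l).

Definition Av {R : realType} (dT : measure_display) (T : measurableType dT)
  (P : probability T R) (F : T -> R) : R := fine ('E_P[F])%E.

(* X is a centered Gaussian random variable with standard deviation s >= 0
   (variance s^2); for s = 0 this is the Dirac mass at 0 *)
Definition centered_gaussian {R : realType} (dT : measure_display)
  (T : measurableType dT) (P : probability T R) (X : T -> R) (s : R) : Prop :=
  measurable_fun setT X /\
  forall B : set R, measurable B ->
    P (X @^-1` B) = (if s == 0 then \d_(0 : R) B else normal_prob 0 s B).

Definition mutually_independent {R : realType} (dT : measure_display)
  (T : measurableType dT) (P : probability T R) (I : choiceType)
  (X : I -> T -> R) : Prop :=
  forall (S : {fset I}) (B : I -> set R), (forall i, measurable (B i)) ->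
    P (\bigcap_(i in [set` S]) (X i @^-1` B i)) =
    (\prod_(i <- S) P (X i @^-1` B i))%E.

(* C^k (k-times continuously differentiable, via continuous iterated
   directional derivatives) and smooth (C^infinity) functions *)
Fixpoint Ck {R : realType} (V : normedModType R) (k : nat) (f : V -> R)
  : Prop :=
  match k with
  | 0 => continuous f
  | k'.+1 => continuous f /\ (forall x v : V, derivable f x v) /\
             (forall v : V, Ck k' (fun x => derive f x v))
  end.

Definition smooth {R : realType} (V : normedModType R) (f : V -> R) : Prop :=
  forall k, Ck k f.

Definition observable {R : realType} (n : nat) (G : 'M[R]_n -> R) : Prop :=
  smooth G /\ forall M, `|G M| <= 1.

Definition Delta1 {R : realType} (dT : measure_display) (T : measurableType dT)
  (P : probability T R) d (J : {fset site d} -> T -> R)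
  (Delta : {fset site d} -> R) (n : nat) (G : 'M[R]_n -> R)
  (a : 'I_d -> int) (L : 'I_d -> nat) (beta : R) : R :=
  \sum_(l < n) Av P (fun w =>
     Omega a J w beta (fun S : replicas n L => hdens a J w (S l) * G (covmx a Delta S))
   - Omega a J w beta (fun S : replicas n L => hdens a J w (S l))
     * Omega a J w beta (fun S : replicas n L => G (covmx a Delta S))).

(* Main.v *)
Require Import Defs.
From HB Require Import structures.
From mathcomp Require Import all_boot all_order all_algebra finmap.
From mathcomp Require Import all_classical all_reals all_analysis.
From mathcomp Require Import ring lra.
Import Order.TTheory GRing.Theory Num.Theory.
Import numFieldNormedType.Exports.
Local Open Scope classical_set_scope.
Local Open Scope ring_scope.

Section Abs.
Variables (R : realType) (C : finType) (n : nat) (E : C -> R) (c0 : C).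
Local Notation RC := {ffun 'I_n -> C}.

Definition En (S : RC) : R := \sum_(k < n) E (S k).
Definition Wt (b : R) (S : RC) : R := expR (- b * En S).
Definition Zn (b : R) : R := \sum_(S : RC) Wt b S.
Definition Zs (b : R) : R := \sum_(s : C) expR (- b * E s).
Definition Om (b : R) (phi : RC -> R) : R := (\sum_(S : RC) phi S * Wt b S) / Zn b.

Lemma Zs_Zn b : Zs b ^+ n = Zn b.
Proof.
rewrite /Zs /Zn -[in LHS](card_ord n) -prodr_const.
rewrite (bigA_distr_bigA (fun (k : 'I_n) (s : C) => expR (- b * E s))).
apply: eq_bigr => S _.
by rewrite /Wt /En mulr_sumr expR_sum.
Qed.

Lemma Wt_gt0 b S : 0 < Wt b S.
Proof. exact: expR_gt0. Qed.

Lemma le_Wt_Zn b S : Wt b S <= Zn b.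
Proof.
rewrite /Zn (bigD1 S) //= lerDl; apply: sumr_ge0 => i _; exact: ltW (Wt_gt0 _ _).
Qed.

Lemma Zn_gt0 b : 0 < Zn b.
Proof. exact: lt_le_trans (Wt_gt0 b [ffun=> c0]) (le_Wt_Zn _ _). Qed.

Lemma Om_lin b x (phi psi : RC -> R) :
  Om b (fun S => x * phi S + psi S) = x * Om b phi + Om b psi.
Proof.
rewrite /Om mulrA -mulrDl; congr (_ / _).
rewrite mulr_sumr -big_split /=; apply: eq_bigr => S _; ring.
Qed.

Lemma Om_ext b (phi psi : RC -> R) : (forall S, phi S = psi S) -> Om b phi = Om b psi.
Proof. by move=> h; rewrite /Om; congr (_ / _); apply: eq_bigr => S _; rewrite h. Qed.

Lemma Om_cst b x : Om b (fun _ => x) = x.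
Proof.
rewrite /Om -mulr_sumr -mulrA divff ?mulr1 //.
by rewrite gt_eqF // Zn_gt0.
Qed.

Lemma Om_scale b x phi : Om b (fun S => x * phi S) = x * Om b phi.
Proof.
rewrite -[RHS]addr0 -(Om_cst b 0) -Om_lin; apply: Om_ext => S; by rewrite addr0.
Qed.

Lemma Om_add b phi psi : Om b (fun S => phi S + psi S) = Om b phi + Om b psi.
Proof.
rewrite -[Om b phi]mul1r -Om_lin; apply: Om_ext => S; by rewrite mul1r.
Qed.

Lemma Om_sub b phi psi : Om b (fun S => phi S - psi S) = Om b phi - Om b psi.
Proof.
rewrite -mulN1r -Om_scale -Om_add; apply: Om_ext => S; by rewrite mulN1r.
Qed.

Lemma Om_sum b (I : Type) (r : seq I) (F : I -> RC -> R) :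
  Om b (fun S => \sum_(i <- r) F i S) = \sum_(i <- r) Om b (F i).
Proof.
elim: r => [|i r IH].
  rewrite big_nil -{2}(Om_cst b 0); apply: Om_ext => S; by rewrite big_nil.
rewrite big_cons -IH -Om_add; apply: Om_ext => S; by rewrite big_cons.
Qed.

Lemma Om_le b phi psi : (forall S, phi S <= psi S) -> Om b phi <= Om b psi.
Proof.
move=> h; rewrite /Om; apply: ler_wpM2r; first by rewrite invr_ge0 ltW ?Zn_gt0.
apply: ler_sum => S _; apply: ler_wpM2r => //; exact: ltW (Wt_gt0 _ _).
Qed.

Lemma Om_norm b phi : `|Om b phi| <= Om b (fun S => `|phi S|).
Proof.
have hZ := Zn_gt0 b.
rewrite /Om normrM [X in _ * X]ger0_norm ?invr_ge0 ?(ltW hZ) //; apply: ler_wpM2r; first by rewrite invr_ge0 ltW ?Zn_gt0.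
apply: le_trans (ler_norm_sum _ _ _) _.
apply: ler_sum => S _; rewrite normrM (ger0_norm (ltW (Wt_gt0 _ _))) //.
Qed.

End Abs.
Section Der.
Variables (R : realType) (C : finType) (n : nat) (E : C -> R) (c0 : C).
Local Notation RC := {ffun 'I_n -> C}.
Local Notation En := (@En R C n E).
Local Notation Wt := (@Wt R C n E).
Local Notation Zn := (@Zn R C n E).
Local Notation Om := (@Om R C n E).

Lemma is_derive_bigsum (I : Type) (r : seq I) (h : I -> R -> R) (dh : I -> R) (x : R) :
  (forall i, is_derive x 1 (h i) (dh i)) ->
  is_derive x 1 (fun y => \sum_(i <- r) h i y) (\sum_(i <- r) dh i).
Proof.
move=> H; elim: r => [|i r IH].
  rewrite big_nil.
  have -> : (fun y => \sum_(i <- [::]) h i y) = cst 0 by apply: funext => y; rewrite big_nil.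
  exact: is_derive_cst.
rewrite big_cons.
have -> : (fun y => \sum_(j <- i :: r) h j y) = h i + (fun y => \sum_(j <- r) h j y).
  by apply: funext => y; rewrite big_cons.
exact: is_deriveD.
Qed.

Lemma is_derive_Wt (b : R) (S : RC) : is_derive b 1 (fun x => Wt x S) (- (En S * Wt b S)).
Proof.
have h1 : is_derive b 1 (fun x : R => - x * En S) (- En S).
  have -> : (fun x : R => - x * En S) = (- En S) \*: id.
    apply: funext => x /=; rewrite /GRing.scale /=; ring.
  rewrite -[X in is_derive _ _ _ X]mulr1.
  exact: is_deriveZ.
have := is_derive1_comp (f := expR) (g := fun x : R => - x * En S) (is_derive_expR _) h1.
by rewrite /Wt mulrN mulrC.
Qed.

Lemma is_derive_A (b : R) (phi : RC -> R) :
  is_derive b 1 (fun x => \sum_(S : RC) phi S * Wt x S)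
    (- \sum_(S : RC) phi S * En S * Wt b S).
Proof.
rewrite -sumrN.
apply: is_derive_bigsum => S.
have -> : (fun x => phi S * Wt x S) = phi S \*: (fun x => Wt x S) by [].
have -> : - (phi S * En S * Wt b S) = phi S *: (- (En S * Wt b S)).
  by rewrite /GRing.scale /= mulrN mulrA.
apply: is_deriveZ; exact: is_derive_Wt.
Qed.

Lemma is_derive_Zn (b : R) : is_derive b 1 Zn (- \sum_(S : RC) En S * Wt b S).
Proof.
have -> : Zn = (fun x => \sum_(S : RC) 1 * Wt x S).
  by apply: funext => x; rewrite /Zn; apply: eq_bigr => S _; rewrite mul1r.
have := is_derive_A b (fun _ => 1).
by under eq_bigr do rewrite mul1r.
Qed.

Lemma is_derive_Om (b : R) (phi : RC -> R) :
  is_derive b 1 (fun x => Om x phi)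
    (- Om b (fun S => phi S * En S) + Om b phi * Om b (fun S => En S)).
Proof.
have hZ := @Zn_gt0 R C n E c0 b.
have hA := is_derive_A b phi.
have hV := is_deriveV (lt0r_neq0 hZ) (is_derive_Zn b).
have hM := is_deriveM hA hV.
have -> : (fun x => Om x phi) = ((fun x => \sum_(S : RC) phi S * Wt x S) * (fun y => (Zn y)^-1)).
  by apply: funext => x.
suff -> : - Om b (fun S => phi S * En S) + Om b phi * Om b (fun S => En S) =
  (\sum_(S : RC) phi S * Wt b S) *: (- Zn b ^- 2 *: - (\sum_(S : RC) En S * Wt b S)) +
  (Zn b)^-1 *: (- \sum_(S : RC) phi S * En S * Wt b S) by [].
rewrite /Om /GRing.scale /=.
rewrite expr2 invfM.
field.
by rewrite gt_eqF.
Qed.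

End Der.
Section Bnd.
Variables (R : realType) (C : finType) (n : nat) (E : C -> R) (c0 : C).
Local Notation RC := {ffun 'I_n -> C}.
Local Notation En := (@En R C n E).
Local Notation Wt := (@Wt R C n E).
Local Notation Zn := (@Zn R C n E).
Local Notation Om := (@Om R C n E).

Definition smin := [arg min_(s < c0) E s]%O.
Lemma sminP s : E smin <= E s.
Proof. rewrite /smin. case: (Order.TotalTheory.arg_minP (P := xpredT)) => // i _ h; exact: h. Qed.
Definition Smin : RC := [ffun=> smin].
Definition mE := En Smin.

Lemma En_ge S : mE <= En S.
Proof. rewrite /mE /En; apply: ler_sum => k _; rewrite ffunE; exact: sminP. Qed.

Lemma xexp_le (b y : R) : 0 < b -> 0 <= y -> y * expR (- (b * y)) <= b^-1.
Proof.
move=> hb hy.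
have h1 : b * y <= expR (b * y).
  apply: le_trans (expR_ge1Dx _); lra.
have he := expR_gt0 (b * y).
rewrite expRN ler_pdivrMr //.
rewrite -{1}(mulKf (lt0r_neq0 hb) y).
by apply: ler_wpM2l => //; rewrite invr_ge0 ltW.
Qed.

Lemma Om_bound (b : R) (psi : RC -> R) : 0 < b ->
  (forall S, 0 <= psi S <= En S - mE) -> Om b psi <= #|RC|%:R / b.
Proof.
move=> hb hpsi.
have hZ := @Zn_gt0 R C n E c0 b.
rewrite /Om mulr_suml.
rewrite [X in _ <= X](_ : _ = \sum_(S : RC) b^-1); last first.
  rewrite sumr_const -[in RHS]mulr_natr mulrC. done.
apply: ler_sum => S _.
have /andP[h0 h1] := hpsi S.
have hWm := @Wt_gt0 R C n E b Smin.
have hWS := @Wt_gt0 R C n E b S.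
apply: le_trans (_ : psi S * Wt b S / Wt b Smin <= _).
  rewrite -!mulrA; apply: ler_wpM2l => //.
  apply: ler_wpM2l; first exact: ltW.
  rewrite lef_pV2 ?posrE //; exact: le_Wt_Zn.
rewrite -mulrA /Wt -expRB.
rewrite (_ : - b * En S - - b * En Smin = - (b * (En S - mE))); last by rewrite /mE; ring.
apply: le_trans (_ : (En S - mE) * expR (- (b * (En S - mE))) <= _).
  by apply: ler_wpM2r => //; exact: ltW (expR_gt0 _).
apply: xexp_le => //; exact: le_trans h1.
Qed.

Lemma Om_abs1 (b : R) (phi : RC -> R) : (forall S, `|phi S| <= 1) -> `|Om b phi| <= 1.
Proof.
move=> h; apply: le_trans (@Om_norm R C n E c0 b phi) _.
rewrite -(@Om_cst R C n E c0 b 1); exact: Om_le.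
Qed.

Lemma cov_bound (b : R) (psi phi : RC -> R) (c : R) : 0 < b ->
  (forall S, 0 <= psi S - c <= En S - mE) -> (forall S, `|phi S| <= 1) ->
  `|Om b (fun S => psi S * phi S) - Om b psi * Om b phi| <= 2 * #|RC|%:R / b.
Proof.
move=> hb hy hphi.
set y := fun S => psi S - c.
have e1 : Om b (fun S => psi S * phi S) = Om b (fun S => y S * phi S) + c * Om b phi.
  rewrite addrC -Om_lin //; apply: Om_ext => S; rewrite /y; ring.
have e2 : Om b psi = Om b y + c.
  rewrite -(@Om_cst R C n E c0 b c) -[Om b y]mul1r -Om_lin //; apply: Om_ext => S; rewrite /y; ring.
rewrite e1 e2.
rewrite (_ : _ + c * Om b phi - _ = Om b (fun S => y S * phi S) - Om b y * Om b phi); last by ring.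
have hO := @Om_bound b y hb hy.
have hy0 : 0 <= Om b y.
  rewrite -(@Om_cst R C n E c0 b 0); apply: (@Om_le R C n E c0) => S; by have /andP[] := hy S.
have hp := @Om_abs1 b phi hphi.
have h3 : `|Om b (fun S => y S * phi S)| <= Om b y.
  apply: le_trans (@Om_norm R C n E c0 _ _) _; apply: (@Om_le R C n E c0) => S.
  have /andP[h0 _] := hy S.
  rewrite normrM (ger0_norm h0) -[X in _ <= X]mulr1; apply: ler_wpM2l => //.
apply: le_trans (ler_normB _ _) _.
have h4 : `|Om b y| * `|Om b phi| <= Om b y.
  rewrite (ger0_norm hy0) -{2}[Om b y]mulr1; exact: ler_wpM2l.
rewrite (_ : 2 * #|RC|%:R / b = #|RC|%:R / b + #|RC|%:R / b); last by ring.
apply: lerD; [exact: le_trans h3 hO | rewrite normrM; exact: le_trans h4 hO].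
Qed.

End Bnd.
Section MeasHelp.
Variables (R : realType) (dT : measure_display) (T : measurableType dT) (P : probability T R).

Lemma int_bnd (f : T -> R) (K : R) : measurable_fun setT f ->
  (forall w, `|f w| <= K) -> P.-integrable setT (EFin \o f).
Proof.
move=> mf hK; apply: measurable_bounded_integrable => //.
  by rewrite -ge0_fin_numE // fin_num_measure.
rewrite /bounded_near; near=> M0; rewrite /globally /= => x _.
apply: le_trans (hK x) _; near: M0; apply: nbhs_pinfty_ge; exact: num_real.
Unshelve. all: end_near.
Qed.

Lemma Rint_sum (m : nat) (h : 'I_m -> T -> R) :
  (forall i, P.-integrable setT (EFin \o h i)) ->
  P.-integrable setT (EFin \o (fun w => \sum_(i < m) h i w)) /\
  \int[P]_(w in setT) (\sum_(i < m) h i w) = \sum_(i < m) \int[P]_(w in setT) h i w.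
Proof.
elim: m h => [|m IH] h hi.
  have e : (fun w => \sum_(i < 0) h i w) = cst 0 by apply: funext => w; rewrite big_ord0.
  rewrite e big_ord0; split; first exact: finite_measure_integrable_cst.
  by rewrite /cst /= Rintegral_cst // mul0r.
have [i1 e1] := IH (fun i => h (widen_ord (leqnSn m) i)) (fun i => hi _).
have e : (fun w => \sum_(i < m.+1) h i w) =
  (fun w => \sum_(i < m) h (widen_ord (leqnSn m) i) w + h ord_max w).
  by apply: funext => w; rewrite big_ord_recr.
have i2 : P.-integrable setT (EFin \o (fun w => \sum_(i < m) h (widen_ord (leqnSn m) i) w + h ord_max w)).
  have -> : (EFin \o (fun w => \sum_(i < m) h (widen_ord (leqnSn m) i) w + h ord_max w)) =
    (EFin \o (fun w => \sum_(i < m) h (widen_ord (leqnSn m) i) w)) \+ (EFin \o h ord_max).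
    by apply: funext => w.
  exact: integrableD.
rewrite e; split => //.
by rewrite RintegralD // e1 big_ord_recr /=.
Qed.

End MeasHelp.
Section Box.
Variables (R : realType) (d : nat) (dT : measure_display) (T : measurableType dT)
  (P : probability T R) (J : {fset site d} -> T -> R) (Delta : {fset site d} -> R)
  (n : nat) (G : 'M[R]_n -> R) (a0 : 'I_d -> int) (L0 : 'I_d -> nat).
Hypothesis mJ : forall X, measurable_fun setT (J X).
Hypothesis G1 : forall M, `|G M| <= 1.

Local Notation RC := {ffun 'I_n -> config L0}.
Definition cc0 : config L0 := [ffun=> true].
Definition EE (w : T) : config L0 -> R := Ham a0 J w.
Definition Gc (S : RC) : R := G (covmx a0 Delta S).
Definition NN : R := #|box L0|%:R.
Definition MM : R := #|RC|%:R.
Local Notation OmW w := (@Om R (config L0) n (EE w)).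
Local Notation EnW w := (@En R (config L0) n (EE w)).

Lemma Omega_Om (w : T) (b : R) (f : RC -> R) : Omega a0 J w b f = OmW w b f.
Proof. by rewrite /Omega /Om -Zs_Zn. Qed.

Definition FF (b : R) (w : T) := Omega a0 J w b Gc.
Definition Fd (b : R) (w : T) := - OmW w b (fun S => Gc S * EnW w S) + OmW w b Gc * OmW w b (fun S => EnW w S).
Definition gg (l : 'I_n) b w :=
  Omega a0 J w b (fun S : replicas n L0 => hdens a0 J w (S l) * G (covmx a0 Delta S))
  - Omega a0 J w b (fun S : replicas n L0 => hdens a0 J w (S l))
    * Omega a0 J w b (fun S : replicas n L0 => G (covmx a0 Delta S)).

Lemma FF_der (b : R) (w : T) : is_derive b 1 (FF ^~ w) (Fd b w).
Proof.
have -> : FF ^~ w = (fun x => OmW w x Gc) by apply: funext => x; rewrite /FF Omega_Om.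
exact: (@is_derive_Om R (config L0) n (EE w) cc0).
Qed.

Lemma FF_bnd (b : R) (w : T) : `|FF b w| <= 1.
Proof. rewrite /FF Omega_Om; apply: (@Om_abs1 R (config L0) n (EE w) cc0) => S; exact: G1. Qed.

Lemma Fd_bnd (b : R) (w : T) : 0 < b -> `|Fd b w| <= 2 * MM / b.
Proof.
move=> hb.
have := @cov_bound R (config L0) n (EE w) cc0 b (fun S => EnW w S) Gc (@mE R (config L0) n (EE w) cc0) hb.
have h : `|Fd b w| = `|OmW w b (fun S => EnW w S * Gc S) - OmW w b (fun S => EnW w S) * OmW w b Gc|.
  rewrite -normrN /Fd; congr `|_|.
  rewrite (@Om_ext R (config L0) n (EE w) b (fun S => Gc S * EnW w S) (fun S => EnW w S * Gc S)); last by move=> S; rewrite mulrC.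
  ring.
rewrite h; apply.
  by move=> S; rewrite lexx andbT subr_ge0 (@En_ge R (config L0) n (EE w) cc0).
by move=> S; exact: G1.
Qed.

Lemma gg_eq (l : 'I_n) (b : R) (w : T) : gg l b w =
  NN^-1 * (OmW w b (fun S => EE w (S l) * Gc S) - OmW w b (fun S => EE w (S l)) * OmW w b Gc).
Proof.
rewrite /gg !Omega_Om.
rewrite (@Om_ext R (config L0) n (EE w) b _ (fun S => NN^-1 * (EE w (S l) * Gc S))); last first.
  by move=> S; rewrite /hdens /NN /EE /Gc; ring.
rewrite (@Om_ext R (config L0) n (EE w) b (fun S => hdens a0 J w (S l)) (fun S => NN^-1 * EE w (S l))); last first.
  by move=> S; rewrite /hdens /NN /EE; ring.
rewrite !(@Om_scale R (config L0) n (EE w) cc0).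
rewrite /Gc; ring.
Qed.

Lemma gg_sum (b : R) (w : T) : \sum_(l < n) gg l b w = - NN^-1 * Fd b w.
Proof.
under eq_bigr do rewrite gg_eq.
have e1 : \sum_(l < n) OmW w b (fun S => EE w (S l) * Gc S) =
    OmW w b (fun S => Gc S * EnW w S).
  rewrite -(@Om_sum R (config L0) n (EE w) cc0 b _ _ (fun l S => EE w (S l) * Gc S)).
  apply: Om_ext => S; rewrite /En mulr_sumr; apply: eq_bigr => i _; by rewrite mulrC.
have e2 : \sum_(l < n) OmW w b (fun S => EE w (S l)) = OmW w b (fun S => EnW w S).
  by rewrite -(@Om_sum R (config L0) n (EE w) cc0 b _ _ (fun l S => EE w (S l))).
rewrite -mulr_sumr sumrB e1 -big_distrl /= e2 /Fd; ring.
Qed.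

Lemma gg_bnd (l : 'I_n) (b : R) (w : T) : 0 < b -> `|gg l b w| <= NN^-1 * (2 * MM / b).
Proof.
move=> hb; rewrite gg_eq normrM ger0_norm ?invr_ge0 ?ler0n //.
apply: ler_wpM2l; first by rewrite invr_ge0 ler0n.
apply: (@cov_bound R (config L0) n (EE w) cc0 b _ Gc (EE w (@smin R (config L0) (EE w) cc0)) hb); last by move=> S; exact: G1.
move=> S; rewrite subr_ge0 (@sminP R (config L0) (EE w) cc0) /=.
rewrite /mE /En (bigD1 l) //= [X in _ <= _ - X](bigD1 l) //= !ffunE.
set s2 := (X in _ <= _ - (_ + X)).
set s1 := (X in _ <= _ + X - _).
have : s2 <= s1.
  apply: ler_sum => i _; rewrite ffunE; exact: (@sminP R (config L0) (EE w) cc0).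
lra.
Qed.

Lemma mexpR (g : T -> R) : measurable_fun setT g -> measurable_fun setT (fun w => expR (g w)).
Proof. move=> mg; have := measurableT_comp (measurable_realfun.measurable_expR (R:=R)) mg; exact. Qed.
Lemma mln (g : T -> R) : measurable_fun setT g -> measurable_fun setT (fun w => ln (g w)).
Proof. move=> mg; have := measurableT_comp (measurable_realfun.measurable_ln (R:=R)) mg; exact. Qed.

Lemma m_Ham (s : config L0) : measurable_fun setT (fun w => Ham a0 J w s).
Proof.
rewrite /Ham; apply: measurable_realfun.measurable_funN.
apply: measurable_sum => X; apply: measurable_realfun.measurable_funM => //; exact: measurable_cst.
Qed.

Lemma m_En (S : RC) : measurable_fun setT (fun w => EnW w S).
Proof. rewrite /En; apply: measurable_sum => k; exact: m_Ham. Qed.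

Lemma m_Omega (b : R) (f : T -> RC -> R) : (forall S, measurable_fun setT (fun w => f w S)) ->
  measurable_fun setT (fun w => Omega a0 J w b (f w)).
Proof.
move=> hf; rewrite /Omega; apply: measurable_realfun.measurable_funM.
  apply: measurable_sum => S; apply: measurable_realfun.measurable_funM => //.
  apply: mexpR.
  apply: measurable_realfun.measurable_funM; first exact: measurable_cst.
  apply: measurable_sum => k; exact: m_Ham.
have e : (fun w => (Zpart a0 L0 J w b ^+ n)^-1) = (fun w => expR (- ln (Zpart a0 L0 J w b ^+ n))).
  apply: funext => w; rewrite expRN lnK //.
  rewrite posrE (_ : Zpart a0 L0 J w b = @Zs R (config L0) (EE w) b) // Zs_Zn; exact: (@Zn_gt0 R (config L0) n (EE w) cc0).
rewrite e; apply: mexpR.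
apply: measurable_realfun.measurable_funN; apply: mln.
apply: measurable_realfun.measurable_funX; rewrite /Zpart.
apply: measurable_sum => s; apply: mexpR.
apply: measurable_realfun.measurable_funM; first exact: measurable_cst.
exact: m_Ham.
Qed.

Lemma m_FF b : measurable_fun setT (FF b).
Proof. apply: (m_Omega b (fun _ => Gc)) => S; exact: measurable_cst. Qed.

Lemma m_Fd b : measurable_fun setT (Fd b).
Proof.
have e : Fd b = (fun w => - Omega a0 J w b (fun S => Gc S * EnW w S) +
   Omega a0 J w b Gc * Omega a0 J w b (fun S => EnW w S)).
  by apply: funext => w; rewrite /Fd !Omega_Om.
rewrite e; apply: measurable_realfun.measurable_funD.
  apply: measurable_realfun.measurable_funN; apply: (m_Omega b (fun w S => Gc S * EnW w S)) => S.
  apply: measurable_realfun.measurable_funM; [exact: measurable_cst | exact: m_En].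
apply: measurable_realfun.measurable_funM.
  apply: (m_Omega b (fun _ => Gc)) => S; exact: measurable_cst.
apply: (m_Omega b (fun w S => EnW w S)) => S; exact: m_En.
Qed.

Lemma m_gg l b : measurable_fun setT (gg l b).
Proof.
rewrite /gg; apply: measurable_realfun.measurable_funB.
  apply: (m_Omega b (fun w S => hdens a0 J w (S l) * G (covmx a0 Delta S))) => S.
  apply: measurable_realfun.measurable_funM; last exact: measurable_cst.
  rewrite /hdens; apply: measurable_realfun.measurable_funM; [exact: m_Ham | exact: measurable_cst].
apply: measurable_realfun.measurable_funM.
  apply: (m_Omega b (fun w S => hdens a0 J w (S l))) => S.
  rewrite /hdens; apply: measurable_realfun.measurable_funM; [exact: m_Ham | exact: measurable_cst].
apply: (m_Omega b (fun _ => Gc)) => S; exact: measurable_cst.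
Qed.

Definition Phi (b : R) : R := \int[P]_(w in setT) FF b w.

Lemma int_FF b : P.-integrable setT (EFin \o FF b).
Proof. exact: (@int_bnd R dT T P _ _ (m_FF b) (FF_bnd b)). Qed.

Lemma int_Fd b : 0 < b -> P.-integrable setT (EFin \o Fd b).
Proof. move=> hb; exact: (@int_bnd R dT T P _ _ (m_Fd b) (fun w => Fd_bnd b w hb)). Qed.

Lemma int_gg l b : 0 < b -> P.-integrable setT (EFin \o gg l b).
Proof. move=> hb; exact: (@int_bnd R dT T P _ _ (m_gg l b) (fun w => gg_bnd l b w hb)). Qed.

Lemma d1_FF b w : partial1of2 FF b w = Fd b w.
Proof. by rewrite partial1of2E; exact: (@derive_val _ _ _ _ _ _ _ (FF_der b w)). Qed.

Lemma Delta1_eq b : 0 < b ->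
  Delta1 P J Delta G a0 L0 b = - NN^-1 * \int[P]_(w in setT) Fd b w.
Proof.
move=> hb.
transitivity (\sum_(l < n) \int[P]_(w in setT) gg l b w); first by apply: eq_bigr => l _; rewrite /Av unlock.
rewrite -(@Rint_sum R dT T P n _ (fun l => int_gg l b hb)).2.
rewrite -RintegralZl //; last exact: int_Fd.
apply: eq_Rintegral => w _; exact: gg_sum.
Qed.

Lemma Om_cont w psi : continuous (fun b => OmW w b psi).
Proof.
move=> b.
have h := @ex_derive _ _ _ _ _ _ _ (@is_derive_Om R (config L0) n (EE w) cc0 b psi).
have := (derivable1_diffP (fun b => OmW w b psi) b).1 h.
exact: differentiable_continuous.
Qed.

Lemma Fd_cont w : continuous (Fd ^~ w).
Proof.
have -> : Fd ^~ w = (fun x => - OmW w x (fun S => Gc S * EnW w S)) +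
   ((fun x => OmW w x Gc) \* (fun x => OmW w x (fun S => EnW w S))).
  by apply: funext => x.
move=> b; apply: continuousD.
  apply: continuousN; exact: Om_cont.
apply: continuousM; exact: Om_cont.
Qed.

Lemma Phi_bnd b : `|Phi b| <= 1.
Proof.
rewrite /Phi; apply: le_trans (le_normr_Rintegral _ (int_FF b)) _ => //.
apply: le_trans (_ : \int[P]_(w in setT) (1 : R) <= _).
  apply: le_Rintegral => //.
    exact: integrable_norm (int_FF b).
  exact: finite_measure_integrable_cst.
  move=> w _; exact: FF_bnd.
rewrite Rintegral_cst // mul1r.
have hP : (P : {measure set T -> \bar R}) setT = 1%E := probability_setT P.
by rewrite hP.
Qed.

Lemma box_bound (b1 b2 : R) : 0 < b1 -> b1 < b2 ->
  `|\int[lebesgue_measure]_(x in `[b1, b2]) Delta1 P J Delta G a0 L0 x| <= 2 * NN^-1.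
Proof.
move=> hb1 hb12.
pose u := b1 / 2. pose v := b2 + 1.
have hu : 0 < u by rewrite /u; lra.
have Iin x : b1 <= x <= b2 -> `]u, v[%classic x.
  move=> /andP[h1 h2]; rewrite /= in_itv /= /u /v; apply/andP; split; lra.
have Ipos x : `]u, v[%classic x -> 0 < x.
  rewrite /= in_itv /= => /andP[h1 h2]; lra.
pose K := 2 * MM / u.
have hMM : 0 <= MM by rewrite /MM ler0n.
have hK : 0 <= K by rewrite /K; apply: divr_ge0 => //; [lra | exact: ltW].
have bndFd x w : `]u, v[%classic x -> `|Fd x w| <= K.
  move=> Ix; have hx := Ipos x Ix.
  apply: le_trans (Fd_bnd x w hx) _.
  rewrite /K; apply: ler_wpM2l; first lra.
  rewrite lef_pV2 ?posrE //.
  by move: Ix; rewrite /= in_itv /= => /andP[h1 _]; exact: ltW.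
have dPhi x : `]u, v[%classic x -> derivable Phi x 1 /\ (Phi^`())%classic x = \int[P]_(w in setT) Fd x w.
  move=> Ix.
  have intf : forall y, `]u, v[%classic y -> P.-integrable setT (EFin \o FF y).
    move=> y _; exact: int_FF.
  have derf : forall y w, `]u, v[%classic y -> setT w -> derivable (FF ^~ w) y 1.
    move=> y w _ _; exact: (@ex_derive _ _ _ _ _ _ _ (FF_der y w)).
  have hG0 : forall w : T, 0 <= cst K w by move=> w.
  have intG : P.-integrable setT (EFin \o cst K) by exact: finite_measure_integrable_cst.
  have Gub : forall y w, `]u, v[%classic y -> setT w -> `|partial1of2 FF y w| <= cst K w.
    move=> y w Iy _; rewrite d1_FF; exact: bndFd.
  split.
    exact: (@derivable_under_integral R dT T P FF setT measurableT x u v Ix intf derf (cst K) hG0 intG Gub).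
  rewrite /Phi (@differentiation_under_integral R dT T P FF setT measurableT x u v Ix intf derf (cst K) hG0 intG Gub).
  apply: eq_Rintegral => w _; exact: d1_FF.
have cFd : {in `]u, v[%classic, continuous (fun x => \int[P]_(w in setT) Fd x w)}.
  apply: (@continuity_under_integral R dT T P Fd setT measurableT u v _ _ (cst K)).
  - move=> x Ix; exact: int_Fd (Ipos x Ix).
  - apply: aeW => w _ x _; exact: Fd_cont.
  - exact: finite_measure_integrable_cst.
  - move=> x Ix; apply: aeW => w _; exact: bndFd.
pose c := - NN^-1.
pose f x := c * \int[P]_(w in setT) Fd x w.
pose F x := c * Phi x.
have e1 : \int[lebesgue_measure]_(x in `[b1, b2]) Delta1 P J Delta G a0 L0 x =
          \int[lebesgue_measure]_(x in `[b1, b2]) f x.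
  apply: eq_Rintegral => x /set_mem; rewrite /= in_itv /= => /andP[h1 h2].
  rewrite Delta1_eq //; lra.
have dF x : `]u, v[%classic x -> derivable F x 1 /\ (F^`())%classic x = f x.
  move=> Ix; have [dP eP] := dPhi x Ix.
  have iP := derivableP dP.
  have iF : is_derive x 1 F (c *: 'D_1 Phi x).
    have -> : F = c \*: Phi by apply: funext.
    exact: is_deriveZ.
  split; first exact: (@ex_derive _ _ _ _ _ _ _ iF).
  rewrite derive1E (@derive_val _ _ _ _ _ _ _ iF) -derive1E eP.
  by [].
have Ic x : x \in `[b1, b2] -> `]u, v[%classic x.
  rewrite in_itv /= => /andP[h1 h2]; apply: Iin; apply/andP; split => //.
have cf : {within `[b1, b2], continuous f}.
  apply: continuous_in_subspaceT => x /set_mem /= Ix.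
  have hc : {for x, continuous (fun _ : R => c)} by exact: cst_continuous.
  have hg := cFd x (mem_set (Ic x Ix)).
  exact: (continuousM hc hg).
have dFall : {in `[b1, b2], forall x, derivable F x 1}.
  move=> x Ix; exact: (dF x (Ic x Ix)).1.
have cF : {within `[b1, b2], continuous F}.
  have := @derivable_within_continuous R R^o F `[b1, b2] dFall.
  by [].
have [_ cFl cFr] := (continuous_within_itvP F hb12).1 cF.
have dFoo : derivable_oo_LRcontinuous F b1 b2.
  split => //.
  move=> x; rewrite in_itv /= => /andP[h1 h2]; apply: dFall.
  by rewrite in_itv /= !ltW.
have F'f : {in `]b1, b2[, (F^`())%classic =1 f}.
  move=> x; rewrite in_itv /= => /andP[h1 h2]; apply: (dF x (Ic x _)).2.
  by rewrite in_itv /= !ltW.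
have FTC := continuous_FTC2 hb12 cf dFoo F'f.
rewrite e1 /Rintegral FTC -EFinB /=.
have hN : 0 <= NN^-1 by rewrite invr_ge0 /NN ler0n.
rewrite /F -mulrBr normrM /c normrN (ger0_norm hN) [X in _ <= X]mulrC.
apply: ler_wpM2l => //.
apply: le_trans (ler_normB _ _) _.
have := Phi_bnd b1; have := Phi_bnd b2; lra.
Qed.
End Box.

Theorem lemma1 (R : realType) (d : nat)
  (dT : measure_display) (T : measurableType dT) (P : probability T R)
  (J : {fset site d} -> T -> R) (Delta : {fset site d} -> R)
  (Delta_ge0 : forall X, 0 <= Delta X)
  (J_gauss : forall X, centered_gaussian P (J X) (Delta X))
  (J_indep : mutually_independent P J)
  (Delta_transl : forall (v : site d) (X : {fset site d}),
      Delta (translate v X) = Delta X)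
  (stability : exists cbar : R, forall (a : 'I_d -> int) (L : 'I_d -> nat)
      (s : config L), cov a Delta s s <= cbar)
  (n : nat) (n_ge1 : (0 < n)%N) (G : 'M[R]_n -> R) (G_obs : observable G)
  (beta1 beta2 : R) (beta1_gt0 : 0 < beta1) (beta12 : beta1 < beta2)
  (a : nat -> 'I_d -> int) (L : nat -> 'I_d -> nat)
  (L_large : forall M : nat, \forall k \near \oo, (M <= #|box (L k)|)%N) :
  (fun k => Rintegral lebesgue_measure `[beta1, beta2]
              (fun beta => Delta1 P J Delta G (a k) (L k) beta))
    @ \oo --> 0.
Proof.
have mJ X : measurable_fun setT (J X) := (J_gauss X).1.
have G1 := G_obs.2.
apply/cvgr0Pnorm_le => e e0.
pose M := Num.Def.archi_bound (2 / e).
have hM : 2 / e < M%:R by apply: archi_boundP; apply: divr_ge0 => //; exact: ltW.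
have hMpos : 0 < M%:R :> R by apply: le_lt_trans hM; apply: divr_ge0 => //; exact: ltW.
near=> k.
have hk : (M <= #|box (L k)|)%N by near: k; exact: L_large.
have hNM : M%:R <= #|box (L k)|%:R :> R by rewrite ler_nat.
have hN : 0 < #|box (L k)|%:R :> R by exact: lt_le_trans hNM.
apply: le_trans (@box_bound R d dT T P J Delta n G (a k) (L k) mJ G1 beta1 beta2 beta1_gt0 beta12) _.
rewrite /NN.
have h2 : 2 / e < #|box (L k)|%:R :> R by exact: lt_le_trans hM hNM.
rewrite ler_pdivrMr //.
rewrite ltr_pdivrMr // in h2.
by rewrite mulrC ltW.
Unshelve. all: end_near.
Qed.
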